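(* Let $a,d,b,k\in\mathbb{P}$ with $b\geq 2$, $\gcd(a,d)=1$ and $a\geq k-1$, and let $$A=\left(a,\ ba+d,\ b^2a+\tfrac{b^2-1}{b-1}d,\ \dots,\ b^ka+\tfrac{b^k-1}{b-1}d\right).$$ Fix $0\leq r\leq a-1$ and for $m\in\mathbb{N}$ put $N_{dr}(m)=O(ma+r)\cdot a+(ma+r)d$. Then $N_{dr}(m)$ is (weakly) increasing in $m\in\mathbb{N}$, i.e. $N_{dr}(m+1)\ge N_{dr}(m)$ for all $m$. More precisely, if $(x_1,\dots,x_k)$ is the greedy presentation of $r$, then $$N_{dr}=\left(\sum_{i=1}^k x_i\right)a+r\big((b-1)a+d\big)=\left(\sum_{i=1}^k b^i x_i\right)a+rd.$$
   Context: $\mathbb{P}$ denotes the positive integers, $\mathbb{N}$ the nonnegative integers. $\langle A\rangle$ is the set of all $\mathbb{N}$-linear combinations of the entries of $A$. For an integer $j$, $N_j=\min\{s\in\langle A\rangle : s\equiv j\pmod a\}$. Let $B=(B_1,\dots,B_k)$ with $B_i=\frac{b^i-1}{b-1}$. For $M\in\mathbb{N}$, $O(M)=\min\{\sum_{i=1}^k b^i x_i : \sum_{i=1}^k B_i x_i=M,\ x_i\in\mathbb{N}\}$. The greedy presentation of $M\in\mathbb{N}$ is the tuple $(x_1,\dots,x_k)\in\mathbb{N}^k$ with $\sum_i B_i x_i=M$ obtained by the greedy algorithm (take $x_k$ maximal, then $x_{k-1}$ maximal for the remainder, etc.); equivalently it is the representation satisfying $x_k=\lfloor (b-1)M/(b^k-1)\rfloor$,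 $x_i\in\{0,1,\dots,b\}$ for $1\le i\le k-1$, and if $2\le i\le k-1$ and $x_i=b$ then $x_1=\cdots=x_{i-1}=0$. *)

(* Defs.v *)
From mathcomp Require Import all_boot.
From Stdlib Require Import ClassicalEpsilon.

Set Implicit Arguments.
Unset Strict Implicit.
Unset Printing Implicit Defensive.

Definition natmin (P : nat -> Prop) : nat :=
  epsilon (inhabits 0) (fun n => P n /\ forall m, P m -> n <= m).

(* B_i = (b^i - 1)/(b - 1) = 1 + b + ... + b^(i-1). *)
Definition Bn (b i : nat) : nat := \sum_(j < i) b ^ j.

Definition Agen (a d b i : nat) : nat :=
  if i is 0 then a else b ^ i * a + Bn b i * d.

Definition inSG (a d b k s : nat) : Prop :=
  exists c : nat -> nat, s = \sum_(0 <= i < k.+1) c i * Agen a d b i.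

Definition Nj (a d b k j : nat) : nat :=
  natmin (fun s => inSG a d b k s /\ s = j %[mod a]).

Definition Ofun (b k M : nat) : nat :=
  natmin (fun v => exists x : nat -> nat,
    \sum_(1 <= i < k.+1) Bn b i * x i = M /\
    v = \sum_(1 <= i < k.+1) b ^ i * x i).

Definition Ndr (a d b k r m : nat) : nat :=
  Ofun b k (m * a + r) * a + (m * a + r) * d.

(* Greedy algorithm: grem n = remainder after choosing x_k, ..., x_{k-n+1}. *)
Fixpoint grem (b k M n : nat) : nat :=
  if n is n'.+1 then grem b k M n' %% Bn b (k - n') else M.

Definition greedy (b k M i : nat) : nat := grem b k M (k - i) %/ Bn b i.

(* Main.v *)
Require Import Defs.
From mathcomp Require Import all_boot zify.
From Stdlib Require Import ClassicalEpsilon.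

Lemma natmin_eq (P : nat -> Prop) n : P n -> (forall m, P m -> n <= m) -> natmin P = n.
Proof.
move=> Hn Hmin; rewrite /natmin.
have [H1 H2] := epsilon_spec (inhabits 0) (fun n => P n /\ forall m, P m -> n <= m)
  (ex_intro _ n (conj Hn Hmin)).
by apply/eqP; rewrite eqn_leq H2 // Hmin.
Qed.

Lemma BnS b i : Bn b i.+1 = b * Bn b i + 1.
Proof.
rewrite /Bn big_ord_recl expn0 addnC; congr (_ + _).
rewrite big_distrr /=; apply: eq_bigr => j _; by rewrite expnS.
Qed.

Lemma Bn0 b : Bn b 0 = 0.
Proof. by rewrite /Bn big_ord0. Qed.

Lemma Bn1 b : Bn b 1 = 1.
Proof. by rewrite BnS Bn0 muln0. Qed.

Lemma Bn_gt0 b i : 0 < Bn b i.+1.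
Proof. by rewrite BnS addn1. Qed.

Lemma expBn b i : 0 < b -> b ^ i = (b - 1) * Bn b i + 1.
Proof.
case: b => // c _; rewrite subn1 /=.
elim: i => [|i IH]; first by rewrite Bn0 muln0.
rewrite expnS IH BnS; lia.
Qed.

Lemma gremS b k M n : grem b k.+1 M n.+1 = grem b k (M %% Bn b k.+1) n.
Proof.
elim: n => [|n IH] //=.
by rewrite -/(grem b k.+1 M n.+1) IH subSS.
Qed.

Lemma greedyS b k M i : 0 < i <= k ->
  greedy b k.+1 M i = greedy b k (M %% Bn b k.+1) i.
Proof.
move=> /andP [Hi Hik]; rewrite /greedy subSn // gremS //.
Qed.

Lemma greedy_top b k M : greedy b k M k = M %/ Bn b k.
Proof. by rewrite /greedy subnn. Qed.

Definition F b k M := \sum_(1 <= i < k.+1) greedy b k M i.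

Lemma F0 b M : F b 0 M = 0.
Proof. by rewrite /F big_geq. Qed.

Lemma FS b k M : F b k.+1 M = M %/ Bn b k.+1 + F b k (M %% Bn b k.+1).
Proof.
rewrite /F big_nat_recr //= greedy_top addnC; congr (_ + _).
apply: eq_big_nat => i Hi; apply: greedyS; lia.
Qed.

Lemma greedy_sum b k M : \sum_(1 <= i < k.+2) Bn b i * greedy b k.+1 M i = M.
Proof.
elim: k M => [|k IH] M.
  by rewrite big_nat1 greedy_top Bn1 mul1n divn1.
rewrite big_nat_recr //= greedy_top.
rewrite (eq_big_nat _ _ (F2 := fun i => Bn b i * greedy b k.+1 (M %% Bn b k.+2) i)); last first.
  move=> i Hi; rewrite greedyS //; lia.
by rewrite IH addnC mulnC -divn_eq.
Qed.

Lemma F_zero b k : F b k 0 = 0.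
Proof. elim: k => [|k IH]; first exact: F0. by rewrite FS div0n mod0n IH. Qed.

Lemma F_add b k N c : F b k.+1 (N + c * Bn b k.+1) = c + F b k.+1 N.
Proof.
rewrite !FS (addnC N) divnMDl ?Bn_gt0 // modnMDl addnA //.
Qed.

Lemma F_P b k N : 0 < b -> F b k N <= F b k N.+1 + (b - 1).
Proof.
move=> hb; elim: k N => [|k IH] N; first by rewrite !F0.
rewrite !FS.
set B := Bn b k.+1.
have hB : 0 < B by apply: Bn_gt0.
have := divn_eq N B; have := ltn_pmod N hB.
move: (N %/ B) (N %% B) => q r hr ->.
rewrite -addnS divnMDl // modnMDl.
have [hr1|hr1] := ltnP r.+1 B.
  rewrite (divn_small hr1) (modn_small hr1) !addn0.
  have := IH r; lia.
have -> : r.+1 = B by lia.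
rewrite divnn hB modnn F_zero.
have -> : r = b * Bn b k by rewrite /B BnS in hr1 hr *; lia.
clear IH hr hr1 hB; subst B. case: k => [|k]; first by rewrite F0; lia.
rewrite -[b * _]add0n F_add F_zero; lia.
Qed.

Lemma F_Piter b k N n : 0 < b -> F b k N <= F b k (N + n) + (b - 1) * n.
Proof.
move=> hb; elim: n => [|n IH]; first by rewrite addn0 muln0 addn0.
have := F_P b k (N + n) hb; rewrite addnS; lia.
Qed.

Lemma F_Q b k N : 0 < b -> F b k.+1 N + 1 <= F b k.+1 (N + Bn b k.+2).
Proof.
move=> hb; have -> : N + Bn b k.+2 = N.+1 + b * Bn b k.+1 by rewrite BnS; lia.
rewrite F_add.
have := F_P b k.+1 N hb; lia.
Qed.

Lemma F_Qiter b k N q : 0 < b -> F b k.+1 N + q <= F b k.+1 (N + q * Bn b k.+2).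
Proof.
move=> hb; elim: q => [|q IH]; first by rewrite addn0 mul0n addn0.
have := F_Q b k (N + q * Bn b k.+2) hb; rewrite mulSn (addnC (Bn _ _)) addnA; lia.
Qed.

Lemma F_mono b k R : 0 < b -> F b k.+2 R <= F b k.+1 R.
Proof.
move=> hb; rewrite FS.
have := F_Qiter b k (R %% Bn b k.+2) (R %/ Bn b k.+2) hb.
rewrite (addnC (R %% _)) -divn_eq; lia.
Qed.

Lemma F_lower b k (x : nat -> nat) : 0 < b ->
  F b k.+1 (\sum_(1 <= i < k.+2) Bn b i * x i) <= \sum_(1 <= i < k.+2) x i.
Proof.
move=> hb; elim: k => [|k IH].
  by rewrite !big_nat1 Bn1 mul1n FS F0 Bn1 divn1 addn0.
rewrite (big_nat_recr k.+2 1 (fun i => Bn b i * x i)) // (big_nat_recr k.+2 1 x) //=.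
rewrite (mulnC (Bn b k.+2)) F_add.
have := F_mono b k (\sum_(1 <= i < k.+2) Bn b i * x i) hb; lia.
Qed.

Lemma wsum b k (x : nat -> nat) : 0 < b ->
  \sum_(1 <= i < k.+1) b ^ i * x i =
  (b - 1) * \sum_(1 <= i < k.+1) Bn b i * x i + \sum_(1 <= i < k.+1) x i.
Proof.
move=> hb; rewrite big_distrr -big_split; apply: eq_bigr => i _.
rewrite expBn // /=; nia.
Qed.

Lemma Ofun_eq b k M : 0 < b -> 0 < k -> Ofun b k M = (b - 1) * M + F b k M.
Proof.
case: k => // k hb _; apply: natmin_eq.
  exists (greedy b k.+1 M); split; first exact: greedy_sum.
  by rewrite wsum // greedy_sum.
move=> v [x [hx ->]]; rewrite wsum // hx.
have := F_lower b k x hb; rewrite hx; lia.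
Qed.

Definition G b k a d M := ((b - 1) * M + F b k M) * a + M * d.

Lemma G_step b k a d M : 0 < b -> G b k a d M <= G b k a d (M + a).
Proof.
move=> hb.
have h1 : (b - 1) * M + F b k M <= (b - 1) * (M + a) + F b k (M + a).
  have := F_Piter b k M a hb; rewrite mulnDr; lia.
rewrite /G; apply: leq_add; first exact: leq_mul h1 (leqnn a).
by apply: leq_mul; rewrite ?leq_addr.
Qed.

Lemma G_iter b k a d r m : 0 < b -> G b k a d r <= G b k a d (m * a + r).
Proof.
move=> hb; elim: m => [|m IH]; first by rewrite mul0n add0n.
apply: leq_trans IH _.
have -> : m.+1 * a + r = m * a + r + a by rewrite mulSn; lia.
exact: G_step.
Qed.

Lemma mod_cancel a d x y : coprime a d -> x <= y ->
  x * d = y * d %[mod a] -> x = y %[mod a].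
Proof.
move=> hc hxy /eqP h; apply/eqP.
rewrite eq_sym eqn_mod_dvd // -(Gauss_dvdr _ hc) mulnBr (mulnC d x) (mulnC d y).
by rewrite -eqn_mod_dvd ?leq_mul2r ?hxy ?orbT // eq_sym.
Qed.

Lemma sg_sum b k a d (c : nat -> nat) :
  \sum_(1 <= i < k.+1) c i * Agen a d b i =
  (\sum_(1 <= i < k.+1) b ^ i * c i) * a + (\sum_(1 <= i < k.+1) Bn b i * c i) * d.
Proof.
rewrite !big_distrl -big_split; apply: eq_big_nat => i /andP [hi _].
case: i hi => // i _ /=; lia.
Qed.

Lemma Nj_eq a d b k r : 0 < a -> 0 < k -> 0 < b -> coprime a d -> r < a ->
  Nj a d b k (d * r) = G b k a d r.
Proof.
case: k => // k ha _ hb hc hr; apply: natmin_eq.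
  split.
    exists (fun i => if i == 0 then 0 else greedy b k.+1 r i).
    rewrite big_ltn // /= mul0n add0n.
    rewrite (eq_big_nat _ _ (F2 := fun i => greedy b k.+1 r i * Agen a d b i)); last first.
      by move=> i /andP [hi _]; case: i hi.
    by rewrite sg_sum wsum // greedy_sum /G /F.
  by rewrite /G modnMDl mulnC.
move=> s [[c ->] hmod].
rewrite big_ltn // sg_sum wsum // /= in hmod *.
set M := \sum_(1 <= i < k.+2) Bn b i * c i.
have hF := F_lower b k c hb; rewrite -/M in hF.
have hs : G b k.+1 a d M <= c 0 * a +
   (((b - 1) * M + \sum_(1 <= i < k.+2) c i) * a + M * d).
  rewrite /G /=; have := leq_mul (leq_add (leqnn ((b - 1) * M)) hF) (leqnn a); lia.
apply: (leq_trans _ hs).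
have hMd : M * d = r * d %[mod a].
  have hm : (c 0 * a + (((b - 1) * M + \sum_(1 <= i < k.+2) c i) * a + M * d)) %% a = (d * r) %% a := hmod.
  move: hm; rewrite !modnMDl => ->; by rewrite mulnC.
have hMr : M %% a = r.
  have [h|h] := leqP r M.
    by rewrite -(mod_cancel _ _ _ _ hc h (esym hMd)) modn_small.
  by rewrite (mod_cancel _ _ _ _ hc (ltnW h) hMd) modn_small.
rewrite (divn_eq M a) hMr; exact: G_iter.
Qed.

Theorem lemma3p3 (a d b k r : nat) :
  0 < a -> 0 < d -> 0 < k -> 2 <= b -> coprime a d -> k - 1 <= a -> r < a ->
  (forall m : nat, Ndr a d b k r m <= Ndr a d b k r m.+1) /\
  Nj a d b k (d * r) =
    (\sum_(1 <= i < k.+1) greedy b k r i) * a + r * ((b - 1) * a + d) /\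
  Nj a d b k (d * r) =
    (\sum_(1 <= i < k.+1) b ^ i * greedy b k r i) * a + r * d.
Proof.
move=> ha hd hk hb2 hc _ hr.
have hb : 0 < b by apply: leq_trans hb2.
split.
  move=> m; rewrite /Ndr !Ofun_eq //.
  have -> : m.+1 * a + r = m * a + r + a by rewrite mulSn; lia.
  exact: G_step.
rewrite Nj_eq // /G; split; first by rewrite -/(F b k r); nia.
case: k hk => // k _.
by rewrite wsum // greedy_sum.
Qed.
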